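(* Let $X$ be a simple act taking values $x_1,\dots,x_n$ in an outcome set $\mathcal{X}$ with probabilities $p_i>0$, $\sum_{i=1}^n p_i=1$, let $u:\mathcal{X}\to\mathbb{R}$ and $u_i=u(x_i)$, and let $\beta\in(-1,\infty)$. Define $v^{(0)}=\sum_{i=1}^n p_iu_i$ and, for $k=1,2,\dots$, $v^{(k)}=\sum_{i=1}^n\tilde p_i^{(k)}u_i$, where $w_i^{(k)}=p_i$ if $u_i\ge v^{(k-1)}$, $w_i^{(k)}=(1+\beta)p_i$ if $u_i<v^{(k-1)}$, and $\tilde p_i^{(k)}=w_i^{(k)}/\sum_{j=1}^n w_j^{(k)}$. Then the sequence $(v^{(k)})$ converges monotonically, in at most $n-1$ steps, to $\mathbb{E}_\beta[u(X)]$.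
   Context: $\mathbb{E}_\beta[u(X)]$ is the unique $v\in\mathbb{R}$ with $\mathbb{E}[(u(X)-v)^+]=(1+\beta)\mathbb{E}[(v-u(X))^+]$, i.e. $\sum_i p_i(u_i-v)^+=(1+\beta)\sum_ip_i(v-u_i)^+$. *)

(* Defs.v *)
From mathcomp Require Import all_boot all_order all_algebra.
Set Implicit Arguments. Unset Strict Implicit. Unset Printing Implicit Defensive.
Import Order.TTheory GRing.Theory Num.Theory.
Local Open Scope ring_scope.

Definition pospart (R : realFieldType) (x : R) : R := Num.max x 0.

(* v is E_beta[u(X)]: sum_i p_i (u_i - v)^+ = (1+beta) sum_i p_i (v - u_i)^+ *)
Definition is_Ebeta (R : realFieldType) (n : nat) (p uu : 'I_n -> R) (beta v : R) : Prop :=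
  \sum_(i < n) p i * pospart (uu i - v) = (1 + beta) * \sum_(i < n) p i * pospart (v - uu i).

Definition wt (R : realFieldType) (n : nat) (p uu : 'I_n -> R) (beta vprev : R) (i : 'I_n) : R :=
  if vprev <= uu i then p i else (1 + beta) * p i.

Fixpoint viter (R : realFieldType) (n : nat) (p uu : 'I_n -> R) (beta : R) (k : nat) : R :=
  match k with
  | 0 => \sum_(i < n) p i * uu i
  | k'.+1 =>
      let vp := viter p uu beta k' in
      (\sum_(i < n) wt p uu beta vp i * uu i) / (\sum_(j < n) wt p uu beta vp j)
  end.

(* Main.v *)
Require Import Defs.
From mathcomp Require Import all_boot all_order all_algebra.
From mathcomp Require Import ring lra zify.
Import Order.TTheory GRing.Theory Num.Theory.
Local Open Scope ring_scope.

Lemma card_arg (n : nat) (Z : nat -> bool) (S : nat -> {set 'I_n}) :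
  (forall k, Z k -> Z k.+1) ->
  (forall k, S k \subset S k.+1) ->
  (forall k, S k = S k.+1 -> Z k.+1) ->
  (~~ Z 0 -> S 0 != set0) ->
  (forall k, S k = setT -> Z k) ->
  forall k, (n.-1 <= k)%N -> Z k.
Proof.
move=> hZ hS hE h0 hT.
have key : forall k, ~~ Z k -> (k < #|S k|)%N.
  elim=> [|k IH] nZ; first by rewrite card_gt0; exact: h0.
  have nZk : ~~ Z k by apply: contra (hZ k) nZ.
  have := IH nZk => lt.
  have neq : S k != S k.+1 by apply/eqP => e; move: nZ; rewrite hE.
  have pr : S k \proper S k.+1 by rewrite properEneq neq hS.
  exact: leq_ltn_trans lt (proper_card pr).
move=> k hk; apply/negPn/negP => nZ.
have lt := key k nZ.
have le : (#|S k| <= n)%N by rewrite -[X in (_ <= X)%N]card_ord max_card.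
have : S k = setT.
  apply/eqP; rewrite eqEcard subsetT /= cardsT card_ord.
  exact: leq_trans (leqSpred n) (leq_ltn_trans hk lt).
by move/hT; apply/negP.
Qed.

Local Set Implicit Arguments. Local Unset Strict Implicit.
Section Main.
Variables (R : realFieldType) (n : nat) (p uu : 'I_n -> R) (beta : R).
Hypotheses (hp : forall i, 0 < p i) (hsum : \sum_(i < n) p i = 1) (hbeta : -1 < beta).

Definition F v := \sum_(i < n) wt p uu beta v i * (uu i - v).
Definition W v := \sum_(i < n) wt p uu beta v i.
Definition T v := (\sum_(i < n) wt p uu beta v i * uu i) / W v.

Lemma hb1 : 0 < 1 + beta.
Proof. by rewrite -ltrBlDl sub0r. Qed.

Lemma wt_gt0 v i : 0 < wt p uu beta v i.
Proof. have := hp i; rewrite /wt; case: ifP => _ // h; apply: mulr_gt0 => //; exact: hb1. Qed.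

Lemma inhab : exists i : 'I_n, true.
Proof.
case: (pickP (@predT 'I_n)) => [i _|h]; first by exists i.
move: hsum; rewrite big1 => [|i _]; first by move/eqP; rewrite eq_sym oner_eq0.
by have := h i.
Qed.

Lemma W_gt0 v : 0 < W v.
Proof.
have [i0 _] := inhab.
rewrite /W (bigD1 i0) //=; apply: ltr_pwDl; first exact: wt_gt0.
by apply: sumr_ge0 => i _; apply: ltW; apply: wt_gt0.
Qed.

Lemma viterS k : viter p uu beta k.+1 = T (viter p uu beta k).
Proof. by []. Qed.

Lemma F_eq v : F v = \sum_(i < n) wt p uu beta v i * uu i - v * W v.
Proof.
rewrite /F /W mulr_sumr -sumrB; apply: eq_bigr => i _; ring.
Qed.

Lemma T_sub v : T v - v = F v / W v.
Proof.
have := W_gt0 v; rewrite F_eq /T => hW.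
field; by rewrite gt_eqF.
Qed.

Lemma G_T a : \sum_(i < n) wt p uu beta a i * (uu i - T a) = 0.
Proof.
have hW := W_gt0 a.
have -> : \sum_(i < n) wt p uu beta a i * (uu i - T a) =
   \sum_(i < n) wt p uu beta a i * uu i - T a * W a.
  rewrite /W mulr_sumr -sumrB; apply: eq_bigr => i _; ring.
rewrite /T; field; by rewrite gt_eqF.
Qed.

Lemma Ebeta_F v : is_Ebeta p uu beta v <-> F v = 0.
Proof.
have -> : F v = \sum_(i < n) p i * pospart (uu i - v)
   - (1 + beta) * \sum_(i < n) p i * pospart (v - uu i).
  rewrite mulr_sumr -sumrB; apply: eq_bigr => i _.
  rewrite /wt /pospart; case: ifP => h.
    rewrite (max_l (x := uu i - v)) ?subr_ge0 // max_r ?subr_le0 //; ring.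
  have h' : uu i < v by rewrite ltNge h.
  rewrite (max_r (x := uu i - v)) ?subr_le0 ?ltW // max_l ?subr_ge0 ?ltW //; ring.
rewrite /is_Ebeta; split; first by move=> ->; rewrite subrr.
by move/eqP; rewrite subr_eq0 => /eqP.
Qed.

Lemma term_le t b i : 0 <= beta ->
  wt p uu beta t i * (uu i - t) <= (if b then p i else (1 + beta) * p i) * (uu i - t).
Proof.
move=> hb; have hpi := hp i; rewrite /wt.
case: b; case h: (t <= uu i).
- by [].
- have : uu i - t < 0 by rewrite subr_lt0 ltNge h.
  move=> h2; rewrite -subr_ge0 -mulrBl; apply: mulr_le0; last exact: ltW.
  have -> : p i - (1 + beta) * p i = - (beta * p i) by ring.
  by rewrite oppr_le0; apply: mulr_ge0 => //; apply: ltW.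
- have : 0 <= uu i - t by rewrite subr_ge0.
  move=> h2; rewrite -subr_ge0 -mulrBl; apply: mulr_ge0 => //.
  have -> : (1 + beta) * p i - p i = beta * p i by ring.
  by apply: mulr_ge0 => //; apply: ltW.
- by [].
Qed.

Lemma term_ge t b i : beta <= 0 ->
  (if b then p i else (1 + beta) * p i) * (uu i - t) <= wt p uu beta t i * (uu i - t).
Proof.
move=> hb; have hpi := hp i; rewrite /wt.
case: b; case h: (t <= uu i).
- by [].
- have : uu i - t < 0 by rewrite subr_lt0 ltNge h.
  move=> h2; rewrite -subr_ge0 -mulrBl; apply: mulr_le0; last exact: ltW.
  have -> : (1 + beta) * p i - p i = beta * p i by ring.
  by apply: mulr_le0_ge0 => //; apply: ltW.
- have : 0 <= uu i - t by rewrite subr_ge0.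
  move=> h2; rewrite -subr_ge0 -mulrBl; apply: mulr_ge0 => //.
  have -> : p i - (1 + beta) * p i = - (beta * p i) by ring.
  by rewrite oppr_ge0; apply: mulr_le0_ge0 => //; apply: ltW.
- by [].
Qed.

Lemma sum_dev0 : \sum_(i < n) p i * (uu i - viter p uu beta 0) = 0.
Proof.
rewrite /=. set v0 := \sum_(i < n) p i * uu i.
have -> : \sum_(i < n) p i * (uu i - v0) = v0 - v0 * \sum_(i < n) p i.
  rewrite mulr_sumr -sumrB; apply: eq_bigr => i _; ring.
by rewrite hsum mulr1 subrr.
Qed.

Lemma F_le0 k : 0 <= beta -> F (viter p uu beta k) <= 0.
Proof.
move=> hb; case: k => [|k].
  rewrite -sum_dev0 /F; apply: ler_sum => i _.
  exact: (term_le _ true i hb).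
rewrite viterS -(G_T (viter p uu beta k)) /F; apply: ler_sum => i _.
exact: (term_le _ (viter p uu beta k <= uu i) i hb).
Qed.

Lemma F_ge0 k : beta <= 0 -> 0 <= F (viter p uu beta k).
Proof.
move=> hb; case: k => [|k].
  rewrite -sum_dev0 /F; apply: ler_sum => i _.
  exact: (term_ge _ true i hb).
rewrite viterS -(G_T (viter p uu beta k)) /F; apply: ler_sum => i _.
exact: (term_ge _ (viter p uu beta k <= uu i) i hb).
Qed.

Lemma step k : viter p uu beta k.+1 - viter p uu beta k
   = F (viter p uu beta k) / W (viter p uu beta k).
Proof. by rewrite viterS T_sub. Qed.

Lemma fixZ k : F (viter p uu beta k) = 0 -> F (viter p uu beta k.+1) = 0.
Proof.
move=> h; have := step k; rewrite h mul0r => /eqP; rewrite subr_eq0 => /eqP ->.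
exact: h.
Qed.

Lemma T_ext a b : (forall i, (a <= uu i) = (b <= uu i)) -> T a = T b.
Proof.
move=> h; have e : forall i, wt p uu beta a i = wt p uu beta b i by move=> i; rewrite /wt h.
by rewrite /T /W; congr (_ / _); apply: eq_bigr => i _; rewrite e.
Qed.

Lemma sameZ k : (forall i, (viter p uu beta k <= uu i) = (viter p uu beta k.+1 <= uu i)) ->
  F (viter p uu beta k.+1) = 0.
Proof.
move=> h; have e : viter p uu beta k.+2 = viter p uu beta k.+1.
  by rewrite !viterS; apply: T_ext.
have := step k.+1; rewrite e subrr => /esym/eqP.
rewrite mulf_eq0 invr_eq0 (gt_eqF (W_gt0 _)) orbF => /eqP //.
Qed.

Lemma F_all_ge v : (forall i, v <= uu i) -> F v = \sum_(i < n) p i * (uu i - v).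
Proof. by move=> h; apply: eq_bigr => i _; rewrite /wt h. Qed.

Lemma F_all_lt v : (forall i, ~~ (v <= uu i)) ->
  F v = \sum_(i < n) (1 + beta) * p i * (uu i - v).
Proof. by move=> h; apply: eq_bigr => i _; rewrite /wt (negbTE (h i)). Qed.

End Main.
Local Unset Implicit Arguments.

Theorem theorem7 (R : realFieldType) (X : Type) (n : nat) (x : 'I_n -> X)
  (u : X -> R) (p : 'I_n -> R) (beta : R)
  (hp : forall i, 0 < p i) (hsum : \sum_(i < n) p i = 1) (hbeta : -1 < beta) :
  let uu := fun i => u (x i) in
  ((forall k, viter p uu beta k <= viter p uu beta k.+1) \/
   (forall k, viter p uu beta k.+1 <= viter p uu beta k)) /\
  (forall k, (n.-1 <= k)%N -> is_Ebeta p uu beta (viter p uu beta k)).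
Proof.
move=> uu.
set v := viter p uu beta.
have Wp k : 0 < W p uu beta (v k) by apply: W_gt0.
have st k : v k.+1 - v k = F p uu beta (v k) / W p uu beta (v k) by apply: step.
have hZ : forall k, (F p uu beta (v k) == 0) -> (F p uu beta (v k.+1) == 0).
  by move=> k /eqP h; apply/eqP; apply: fixZ.
have hE : forall k, (forall i, (v k <= uu i) = (v k.+1 <= uu i)) ->
    F p uu beta (v k.+1) == 0.
  by move=> k h; apply/eqP; apply: (sameZ hp hsum hbeta).
have hb1 : 0 < 1 + beta by rewrite -ltrBlDl sub0r.
have hpos : forall i, 0 < p i := hp.
case: (lerP 0 beta) => hb.
-
  have dec : forall k, v k.+1 <= v k.
    move=> k; rewrite -subr_le0 st; apply: mulr_le0_ge0; first exact: F_le0.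
    by rewrite invr_ge0 ltW.
  split; first by right.
  move=> k hk; apply/Ebeta_F; apply/eqP.
  apply: (@card_arg n (fun k => F p uu beta (v k) == 0)
      (fun k => [set i | v k <= uu i])) => //.
  + move=> j; apply/subsetP => i; rewrite !inE => h; exact: le_trans (dec j) h.
  + move=> j e; apply: hE => i.
    by move/setP: e => /(_ i); rewrite !inE.
  + move=> nZ; apply/set0Pn.
    case: (pickP (fun i => v 0 <= uu i)) => [i hi|h]; first by exists i; rewrite inE.
    move: nZ; rewrite F_all_lt; last by move=> i; rewrite h.
    under eq_bigr do rewrite -mulrA.
    by rewrite -mulr_sumr sum_dev0 // mulr0 eqxx.
  + move=> j e; rewrite eq_le F_le0 //=.
    rewrite F_all_ge; last by move=> i; move/setP: e => /(_ i); rewrite !inE.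
    apply: sumr_ge0 => i _; apply: mulr_ge0; first exact: ltW.
    by move/setP: e => /(_ i); rewrite !inE subr_ge0 => ->.
- have hb' : beta <= 0 by apply: ltW.
  have inc : forall k, v k <= v k.+1.
    move=> k; rewrite -subr_ge0 st; apply: divr_ge0; first exact: F_ge0.
    exact: ltW.
  split; first by left.
  move=> k hk; apply/Ebeta_F; apply/eqP.
  apply: (@card_arg n (fun k => F p uu beta (v k) == 0)
      (fun k => [set i | ~~ (v k <= uu i)])) => //.
  + move=> j; apply/subsetP => i; rewrite !inE -!ltNge => h; exact: lt_le_trans h (inc j).
  + move=> j e; apply: hE => i.
    by move/setP: e => /(_ i); rewrite !inE => /negb_inj.
  + move=> nZ; apply/set0Pn.
    case: (pickP (fun i => ~~ (v 0 <= uu i))) => [i hi|h]; first by exists i; rewrite inE.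
    move: nZ; rewrite F_all_ge; last by move=> i; have := h i; move/negbFE.
    by rewrite sum_dev0 // eqxx.
  + move=> j e; rewrite eq_le F_ge0 // andbT.
    rewrite F_all_lt; last by move=> i; move/setP: e => /(_ i); rewrite !inE.
    apply: sumr_le0 => i _; apply: mulr_ge0_le0.
      by apply: mulr_ge0; apply: ltW.
    by move/setP: e => /(_ i); rewrite !inE -ltNge subr_le0 => /ltW.
Qed.
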